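(* Let $\Omega$ be a measurable space with reference measure $\mathrm{d}\mathbf{y}$, let $\Theta$ be a parameter set, and for each $\bm{\theta}\in\Theta$ let $f_{\bm{\theta}}(\cdot\mid\cdot):\Omega\times\Omega\to\mathbb{R}$ be such that $0<\int_\Omega\exp\{f_{\bm{\theta}}(\mathbf{y}\mid\mathbf{u})\}\,\mathrm{d}\mathbf{y}<\infty$ for all $\mathbf{u}\in\Omega$. Given a fixed initial point $\mathbf{y}_0$ and observations $\mathbf{y}_1,\ldots,\mathbf{y}_n\in\Omega$, let $$\mathcal{L}(\bm{\theta})=\sum_{t=1}^n\left[f_{\bm{\theta}}(\mathbf{y}_t\mid\mathbf{y}_{t-1})-\log\int_\Omega\exp\{f_{\bm{\theta}}(\mathbf{y}\mid\mathbf{y}_{t-1})\}\,\mathrm{d}\mathbf{y}\right].$$ Let $\mathcal{F}$ be a set of functions $\Omega\to\mathbb{R}$ containing, for every $\bm{\theta}\in\Theta$, the function $\chi_{\bm{\theta}}(\mathbf{u})=-\log\int_\Omega\exp\{f_{\bm{\theta}}(\mathbf{y}\mid\mathbf{u})\}\,\mathrm{d}\mathbf{y}$. For $\bm{\theta}\in\Theta$ and $\chi\in\mathcal{F}$ define $$\mathcal{M}_\chi(\bm{\theta},\chi)=\sum_{t=1}^n\{f_{\bm{\theta}}(\mathbf{y}_t\mid\mathbf{y}_{t-1})+\chi(\mathbf{y}_{t-1})\}-\int_\Omega\sum_{t=1}^n\exp\{f_{\bm{\theta}}(\mathbf{y}\mid\mathbf{y}_{t-1})+\chi(\mathbf{y}_{t-1})\}\,\mathrm{d}\mathbf{y}.$$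 Then the set of points $\bm{\theta}^\star\in\operatorname{argmax}_{\bm{\theta}\in\Theta}\mathcal{L}(\bm{\theta})$ coincides with the set of points $\tilde{\bm{\theta}}$ such that $(\tilde{\bm{\theta}},\chi)\in\operatorname{argmax}_{\bm{\theta}\in\Theta,\chi\in\mathcal{F}}\mathcal{M}_\chi(\bm{\theta},\chi)$ for some $\chi\in\mathcal{F}$.
   Context: $\mathcal{L}$ is the log-likelihood of a Markov chain with unnormalised transition density $\propto\exp\{f_{\bm{\theta}}(\mathbf{y}_t\mid\mathbf{y}_{t-1})\}$. *)

(* Defs.v *)
From HB Require Import structures.
From mathcomp Require Import all_boot all_order all_algebra.
From mathcomp Require Import all_classical all_reals all_analysis.
Set Implicit Arguments. Unset Strict Implicit. Unset Printing Implicit Defensive.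
Import Order.TTheory GRing.Theory Num.Theory.
Local Open Scope classical_set_scope.
Local Open Scope ring_scope.

Definition argmax (T : Type) (d : Order.disp_t) (V : porderType d)
  (S : set T) (g : T -> V) : set T :=
  [set x | S x /\ forall x', S x' -> (g x' <= g x)%O].

Section MarkovLik.
Context {R : realType} {d : measure_display} {Omega : measurableType d}.
Context (mu : {measure set Omega -> \bar R}) {Theta : Type}.
(* f th y u  stands for  f_theta(y | u) *)
Context (f : Theta -> Omega -> Omega -> R).

Definition normconst (th : Theta) (u : Omega) : \bar R :=
  (\int[mu]_z (expR (f th z u))%:E)%E.

Definition chi_theta (th : Theta) (u : Omega) : R :=
  - ln (fine (normconst th u)).

Definition loglik (y : nat -> Omega) (n : nat) (th : Theta) : R :=
  \sum_(1 <= t < n.+1) (f th (y t) (y t.-1) - ln (fine (normconst th (y t.-1)))).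

Definition Mchi (y : nat -> Omega) (n : nat) (th : Theta) (chi : Omega -> R)
  : \bar R :=
  ((\sum_(1 <= t < n.+1) (f th (y t) (y t.-1) + chi (y t.-1)))%:E
   - \int[mu]_z (\sum_(1 <= t < n.+1) expR (f th z (y t.-1) + chi (y t.-1)))%:E)%E.
End MarkovLik.

(* Main.v *)
Require Import Defs.
From HB Require Import structures.
From mathcomp Require Import all_boot all_order all_algebra.
From mathcomp Require Import all_classical all_reals all_analysis.
From mathcomp Require Import lra measurable_realfun.
Import Order.TTheory GRing.Theory Num.Theory.
Local Open Scope classical_set_scope.
Local Open Scope ring_scope.

Lemma key_ineq (R : realType) (a c : R) : 0 < c -> a - expR a * c <= - ln c - 1.
Proof.
move=> c0.
have h := expR_ge1Dx (a + ln c).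
rewrite expRD lnK ?posrE // in h.
lra.
Qed.

Lemma key_eq (R : realType) (c : R) : 0 < c -> - ln c - expR (- ln c) * c = - ln c - 1.
Proof.
by move=> c0; rewrite expRN lnK ?posrE // mulVf ?gt_eqF.
Qed.

Section S.
Variables (R : realType) (d : measure_display) (Omega : measurableType d)
  (mu : {measure set Omega -> \bar R}) (Theta : Type)
  (f : Theta -> Omega -> Omega -> R)
  (f_meas : forall th u, measurable_fun setT (fun z => f th z u))
  (f_norm : forall th u,
     (0 < normconst mu f th u)%E /\ (normconst mu f th u < +oo)%E)
  (y : nat -> Omega) (n : nat).

Let c th u := fine (normconst mu f th u).

Lemma c_gt0 th u : 0 < c th u.
Proof.
have [h1 h2] := f_norm th u.
rewrite /c; apply: fine_gt0; by rewrite h1 h2.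
Qed.

Lemma c_E th u : normconst mu f th u = (c th u)%:E.
Proof.
have [h1 h2] := f_norm th u.
rewrite /c fineK // ge0_fin_numE //; exact: ltW.
Qed.

Lemma mexp (g : Omega -> R) : measurable_fun setT g ->
  measurable_fun setT (fun x => (expR (g x))%:E).
Proof. by move=> mg; apply/measurable_EFinP; apply: measurableT_comp. Qed.

Lemma Mchi_eq th chi : Mchi mu f y n th chi =
  (\sum_(1 <= t < n.+1) (f th (y t) (y t.-1) + chi (y t.-1)
      - expR (chi (y t.-1)) * c th (y t.-1)))%:E.
Proof.
rewrite /Mchi.
under eq_integral do rewrite -sumEFin.
rewrite ge0_integral_sum //; last first.
  by move=> t; apply: mexp; apply: measurable_funD.
have -> : (\sum_(1 <= t < n.+1) \int[mu]_x (expR (f th x (y t.-1) + chi (y t.-1)))%:E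
   = (\sum_(1 <= t < n.+1) (expR (chi (y t.-1)) * c th (y t.-1)))%:E)%E.
  rewrite -sumEFin; apply: eq_bigr => t _.
  under eq_integral do rewrite expRD mulrC EFinM.
  rewrite ge0_integralZl_EFin //; last by apply: mexp.
  by rewrite -/(normconst mu f th (y t.-1)) c_E.
by rewrite sumrB EFinB.
Qed.

Let G th := \sum_(1 <= t < n.+1) (f th (y t) (y t.-1) - ln (c th (y t.-1)) - 1).

Lemma G_eq th : G th = loglik mu f y n th - \sum_(1 <= t < n.+1) (1 : R).
Proof. by rewrite /G /loglik sumrB. Qed.

Lemma M_le th chi : (Mchi mu f y n th chi <= (G th)%:E)%E.
Proof.
rewrite Mchi_eq lee_fin; apply: ler_sum => t _.
have := @key_ineq R (chi (y t.-1)) _ (c_gt0 th (y t.-1)); lra.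
Qed.

Lemma M_chi th : Mchi mu f y n th (chi_theta mu f th) = (G th)%:E.
Proof.
rewrite Mchi_eq; congr (_%:E); apply: eq_bigr => t _.
rewrite /chi_theta -/(c th (y t.-1)).
have := @key_eq R _ (c_gt0 th (y t.-1)); lra.
Qed.

Lemma G_le th th' : (G th <= G th') = (loglik mu f y n th <= loglik mu f y n th').
Proof. by rewrite !G_eq lerD2r. Qed.

End S.

Theorem corollary1 (R : realType) (d : measure_display) (Omega : measurableType d)
  (mu : {measure set Omega -> \bar R}) (Theta : Type)
  (f : Theta -> Omega -> Omega -> R)
  (f_meas : forall th u, measurable_fun setT (fun z => f th z u))
  (f_norm : forall th u,
     (0 < normconst mu f th u)%E /\ (normconst mu f th u < +oo)%E)
  (y : nat -> Omega) (n : nat)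
  (F : set (Omega -> R))
  (hF : forall th, F (chi_theta mu f th)) :
  argmax setT (loglik mu f y n) =
  [set tht | exists chi, F chi /\
     argmax (setT `*` F) (fun p : Theta * (Omega -> R) => Mchi mu f y n p.1 p.2)
       (tht, chi)].
Proof.
have ML := @M_le R d Omega mu Theta f f_meas f_norm y n.
have MC := @M_chi R d Omega mu Theta f f_meas f_norm y n.
have GL := @G_le R d Omega mu Theta f y n.
apply/seteqP; split => th /=.
- move=> [_ hmax]; exists (chi_theta mu f th); split => //; split; first by split => //=.
  move=> [th' chi'] [_ Fchi] /=.
  rewrite MC; apply: (le_trans (ML th' chi')).
  rewrite lee_fin GL; exact: hmax.
- move=> [chi [Fchi [_ hmax]]]; split => // th' _.
  rewrite -GL -lee_fin.
  apply: (@le_trans _ _ (Mchi mu f y n th chi)); last exact: ML.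
  rewrite -MC; apply: (hmax (th', chi_theta mu f th')); by split => //=; exact: hF.
Qed.
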